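(* Let $(\Phi,\mathtt{Prg},\mathrm{AT})$ be a CLC SPL with $\Phi=(\mathcal F,\phi)$. If $\phi\vdash\mathtt{Prg}\ \textsc{ok}$ (family-based typing), then $\vdash\mathtt{Prg}\ \textsc{ok}$ (LC typing), i.e. the code base is a well-typed LC program.
   Context: **Lightweight C (LC).** Types: $T ::= \mathtt{int}\mid \mathtt{void}* \mid \mathtt{struct}\ s*$ ($s$ a struct name). Expressions: $e ::= n$ (integer literal) $\mid \mathtt{NULL}\mid x$ (parameter name) $\mid f(e_1,\dots,e_k)$ ($k\ge0$) $\mid e\texttt{->}m \mid e\texttt{->}m=e \mid e\,?\,e:e \mid (e_1,\dots,e_k)$ ($k\ge1$, a parenthesized expression sequence) $\mid \mathsf{uop}\ e\mid e\ \mathsf{bop}\ e\mid \mathtt{MALLOC}(\mathtt{struct}\ s)\mid \mathtt{MFREE}(e)$. A struct definition is $\mathtt{struct}\ s\{T_1\,m_1;\dots;T_k\,m_k;\};$ (distinct member names); a function definition is $T_0\ f(T_1\,x_1,\dots,T_k\,x_k)\{\mathtt{return}\ e;\}$ (distinct parameter names); a program $\mathtt{Prg}=\overline{SD}\ \overline{FD}$ is a sequence of struct definitions followed by a sequence of function definitions, with distinct struct names and distinct function names. $\mathtt{Prg}$ is regarded as a finite map: $\mathtt{Prg}(s)$ is the definition of struct $s$, $\mathtt{Prg}(s)(m)=$ ''$T\ m$'' is the declaration of member $m$ in it, $\mathtt{Prg}(f)$ is the definition of function $f$; $\mathrm{dom}(\overline{SD})$ is the set of defined struct names. $\mathtt{Prg}$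 is *sane* if (1) every struct name occurring anywhere in $\mathtt{Prg}$ is defined in $\mathtt{Prg}$, (2) every function name occurring in the function definitions is defined in $\mathtt{Prg}$, (3) $\mathtt{Prg}(\mathtt{main})=\mathtt{int\ main}()\{\mathtt{return}\ e;\}$ for some $e$. Operator types: unary $-:(\mathtt{int})\to\mathtt{int}$; unary $!:(T)\to\mathtt{int}$ for every type $T$; binary $+,-,*,/,\&\&,||,<,<=,>,>=:(\mathtt{int},\mathtt{int})\to\mathtt{int}$; binary $==,!=:(T,T)\to\mathtt{int}$ for every type $T$. Subtyping $\le$ is the reflexive closure of $\mathtt{void}*\le\mathtt{struct}\ s*$ for every struct $s$ defined in the program; $\max_\le\{T_1,T_2\}$ is the greater of two $\le$-comparable types. LC typing ($\Gamma$ a finite map from parameter names to types): (T-prg) if $\mathtt{Prg}$ is sane, $\mathtt{Prg}=\overline{SD}\,\overline{FD}$ and $\vdash FD\ \textsc{ok}$ for every $FD$ in $\overline{FD}$, then $\vdash\mathtt{Prg}\ \textsc{ok}$. (T-fun) if $x_1{:}T_1,\dots,x_k{:}T_k\vdash e:T'$ and $T'\le T_0$ then $\vdash T_0\,f(T_1x_1,\dots,T_kx_k)\{\mathtt{return}\ e;\}\ \textsc{ok}$. (T-int) $\Gamma\vdash n:\mathtt{int}$. (T-null) $\Gamma\vdash\mathtt{NULL}:\mathtt{void}*$. (T-par) if $x{:}T\in\Gamma$ then $\Gamma\vdash x:T$. (T-app) if $\mathtt{Prg}(f)=T_0\,f(T_1x_1,\dots,T_kx_k)\{\dots\}$, and $\Gamma\vdash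 e_i:T_i'$, $T_i'\le T_i$ for $i=1..k$ (exactly $k$ arguments), then $\Gamma\vdash f(e_1,\dots,e_k):T_0$. (T-member) if $\Gamma\vdash e_0:\mathtt{struct}\ s*$ and $\mathtt{Prg}(s)(m)=T\,m$ then $\Gamma\vdash e_0\texttt{->}m:T$. (T-assign) if additionally $\Gamma\vdash e_1:T_1$, $T_1\le T$, then $\Gamma\vdash e_0\texttt{->}m=e_1:T$. (T-cond) if $\Gamma\vdash e_j:T_j$ ($j=0,1,2$) and $T_3=\max_\le\{T_1,T_2\}$ then $\Gamma\vdash e_0?e_1:e_2:T_3$. (T-seq) if $\Gamma\vdash e_i:T_i$ for $i=1..n$ then $\Gamma\vdash(e_1,\dots,e_n):T_n$. (T-uop) if $\Gamma\vdash e_0:T_0$ and $\mathsf{uop}$ has type $(T_0)\to\mathtt{int}$ then $\Gamma\vdash\mathsf{uop}\,e_0:\mathtt{int}$. (T-bop) if $\Gamma\vdash e_1:T_1$, $\Gamma\vdash e_2:T_2$, $T_3=\max_\le\{T_1,T_2\}$ and $\mathsf{bop}$ has type $(T_3,T_3)\to\mathtt{int}$ then $\Gamma\vdash e_1\,\mathsf{bop}\,e_2:\mathtt{int}$. (T-malloc) if $s\in\mathrm{dom}(\overline{SD})$ then $\Gamma\vdash\mathtt{MALLOC}(\mathtt{struct}\ s):\mathtt{struct}\ s*$. (T-mfree) if $\Gamma\vdash e_0:\mathtt{struct}\ s*$ then $\Gamma\vdash\mathtt{MFREE}(e_0):\mathtt{void}*$. **Colored LC (CLC).** A feature model $\Phi=(\mathcal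 F,\phi)$: $\mathcal F$ a finite set of features, $\phi$ a propositional formula over $\mathcal F$ (connectives $!,\&\&,||$, constants $0,1$). For formulas, $\theta\models\theta'$ means $\theta\Rightarrow\theta'$ is valid; $\psi_1\Rightarrow\psi_2$ abbreviates $!\psi_1||\psi_2$ and $\psi_1\Leftrightarrow\psi_2$ the conjunction of both implications. An SPL is a triple $(\Phi,\mathtt{Prg},\mathrm{AT})$ with $\mathtt{Prg}$ an LC program (the code base) and $\mathrm{AT}$ an annotation table assigning a propositional formula over $\mathcal F$ to each occurrence of an annotable fragment of $\mathtt{Prg}$; annotable fragments are: each struct definition, each member declaration $T\,m$, each function definition, each formal parameter declaration $T\,x$, each argument of a function call, and each element of a parenthesized sequence. Occurrences not explicitly annotated have annotation $1$. Abbreviations: $\mathrm{AT}(s)=\mathrm{AT}(\mathtt{Prg}(s))$ is the annotation of the definition of struct $s$, $\mathrm{AT}(f)=\mathrm{AT}(\mathtt{Prg}(f))$ that of function $f$; $\mathrm{AT}(\mathtt{int})=\mathrm{AT}(\mathtt{void}* )=1$, $\mathrm{AT}(\mathtt{struct}\ s* )=\mathrm{AT}(\mathtt{Prg}(s))$; $\exists(e_1,\dots,e_n)=\mathrm{AT}(e_1)||\cdots||\mathrm{AT}(e_n)$; $\mathtt{neverLast}(k,(e_1,\dots,e_n))=\,!\mathrm{AT}(e_k)||\mathrm{AT}(e_{k+1})||\cdots||\mathrm{AT}(e_n)$. An annotated type environment $\Delta$ maps parameter names to pairs written $x{:}T$ with $\psi$. Family-based typing: (FT-prg) if $\mathtt{Prg}$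 is sane, $\mathrm{AT}(\mathtt{main})=1$, $\mathtt{Prg}=\overline{SD}\,\overline{FD}$, $\phi\,\&\&\,\mathrm{AT}(SD)\vdash SD\ \textsc{ok}$ for each $SD$ in $\overline{SD}$ and $\phi\,\&\&\,\mathrm{AT}(FD)\vdash FD\ \textsc{ok}$ for each $FD$ in $\overline{FD}$, then $\phi\vdash\mathtt{Prg}\ \textsc{ok}$. (FT-struct) if $\theta\models\mathrm{AT}(T_i\,m_i)\Rightarrow\mathrm{AT}(T_i)$ for all $i$, then $\theta\vdash\mathtt{struct}\ s\{T_1m_1;\dots;T_km_k;\}\ \textsc{ok}$. (FT-fun) if $\theta\models\mathrm{AT}(T_0)$, $\theta\models\mathrm{AT}(T_i\,x_i)\Rightarrow\mathrm{AT}(T_i)$ for all $i$, $\theta;\ x_1{:}T_1\text{ with }\mathrm{AT}(T_1x_1),\dots,x_k{:}T_k\text{ with }\mathrm{AT}(T_kx_k)\vdash e:T'$ and $T'\le T_0$, then $\theta\vdash T_0\,f(T_1x_1,\dots,T_kx_k)\{\mathtt{return}\ e;\}\ \textsc{ok}$. (FT-int) $\theta;\Delta\vdash n:\mathtt{int}$. (FT-null) $\theta;\Delta\vdash\mathtt{NULL}:\mathtt{void}*$. (FT-par) if $x{:}T$ with $\psi$ is in $\Delta$ and $\theta\models\psi$ then $\theta;\Delta\vdash x:T$. (FT-app) if $\mathtt{Prg}(f)=T_0\,f(T_1x_1,\dots,T_kx_k)\{\dots\}$, $\theta\models\mathrm{AT}(\mathtt{Prg}(f))$, and for $i=1..k$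 (exactly $k$ arguments) $\theta;\Delta\vdash e_i:T_i'$, $T_i'\le T_i$ and $\theta\models\mathrm{AT}(e_i)\Leftrightarrow\mathrm{AT}(T_ix_i)$, then $\theta;\Delta\vdash f(e_1,\dots,e_k):T_0$. (FT-member) if $\theta;\Delta\vdash e_0:\mathtt{struct}\ s*$, $\mathtt{Prg}(s)(m)=T\,m$ and $\theta\models\mathrm{AT}(T\,m)$ then $\theta;\Delta\vdash e_0\texttt{->}m:T$. (FT-assign) if additionally $\theta;\Delta\vdash e_1:T_1$ and $T_1\le T$ then $\theta;\Delta\vdash e_0\texttt{->}m=e_1:T$. (FT-cond), (FT-uop), (FT-bop), (FT-mfree): as T-cond, T-uop, T-bop, T-mfree with every judgment $\Gamma\vdash$ replaced by $\theta;\Delta\vdash$. (FT-seq) if $\theta\models\exists(e_1,\dots,e_n)$, $\theta\,\&\&\,\mathrm{AT}(e_i);\Delta\vdash e_i:T_i$ for all $i$, $T=T_n$, and $\theta\models\mathtt{neverLast}(i,(e_1,\dots,e_n))$ for every $i$ with $T_i\ne T$, then $\theta;\Delta\vdash(e_1,\dots,e_n):T$. (FT-malloc) if $s\in\mathrm{dom}(\overline{SD})$ and $\theta\models\mathrm{AT}(\mathtt{Prg}(s))$ then $\theta;\Delta\vdash\mathtt{MALLOC}(\mathtt{struct}\ s):\mathtt{struct}\ s*$. *)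

(* Defs.v *)
From Stdlib Require Import List String ZArith Bool.
Import ListNotations.


Definition sname := string.
Definition mname := string.
Definition pname := string.
Definition fname := string.

Inductive formula (Fe : Type) : Type :=
| FVar (f : Fe)
| FNot (p : formula Fe)
| FAnd (p q : formula Fe)
| FOr (p q : formula Fe)
| F0
| F1.
Arguments FVar {Fe} f.
Arguments FNot {Fe} p.
Arguments FAnd {Fe} p q.
Arguments FOr {Fe} p q.
Arguments F0 {Fe}.
Arguments F1 {Fe}.

Fixpoint feval {Fe : Type} (v : Fe -> bool) (p : formula Fe) : bool :=
  match p with
  | FVar f => v f
  | FNot p => negb (feval v p)
  | FAnd p q => feval v p && feval v q
  | FOr p q => feval v p || feval v q
  | F0 => false
  | F1 => true
  end.

Definition entails {Fe : Type} (th th' : formula Fe) : Prop :=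
  forall v : Fe -> bool, feval v th = true -> feval v th' = true.

Definition fimpl {Fe : Type} (p q : formula Fe) : formula Fe := FOr (FNot p) q.
Definition fiff {Fe : Type} (p q : formula Fe) : formula Fe :=
  FAnd (fimpl p q) (fimpl q p).
Definition fors {Fe : Type} (l : list (formula Fe)) : formula Fe :=
  fold_right FOr F0 l.

(** The syntax is parameterized by the type [A] of labels carried by the
    annotable fragments (struct definitions, member declarations, function
    definitions, formal parameter declarations, call arguments, elements of
    parenthesized sequences).  A CLC SPL's code base together with its
    annotation table is a [program (formula Fe)]; the plain LC code base is
    obtained by erasing the labels ([erase_program], labels [unit]). *)
Inductive ty : Type :=
| TInt
| TVoid                      (* void* *)
| TStruct (s : sname).       (* struct s* *)

Inductive uop : Type := UNeg | UNot.
Inductive bop : Type :=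
| BAdd | BSub | BMul | BDiv | BAnd | BOr | BLt | BLe | BGt | BGe | BEq | BNe.

Inductive exp (A : Type) : Type :=
| ENum (n : Z)
| ENull
| EPar (x : pname)
| EApp (f : fname) (args : list (A * exp A))
| EMem (e : exp A) (m : mname)                       (* e->m *)
| EAssign (e0 : exp A) (m : mname) (e1 : exp A)
| ECond (e0 e1 e2 : exp A)
| ESeq (es : list (A * exp A))
| EUop (u : uop) (e : exp A)
| EBop (b : bop) (e1 e2 : exp A)
| EMalloc (s : sname)
| EFree (e : exp A).
Arguments ENum {A} n.
Arguments ENull {A}.
Arguments EPar {A} x.
Arguments EApp {A} f args.
Arguments EMem {A} e m.
Arguments EAssign {A} e0 m e1.
Arguments ECond {A} e0 e1 e2.
Arguments ESeq {A} es.
Arguments EUop {A} u e.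
Arguments EBop {A} b e1 e2.
Arguments EMalloc {A} s.
Arguments EFree {A} e.

Record sdef (A : Type) := SDef {
  sd_ann : A;
  sd_name : sname;
  sd_members : list (A * (ty * mname))
}.
Arguments SDef {A}.
Arguments sd_ann {A}.
Arguments sd_name {A}.
Arguments sd_members {A}.

Record fdef (A : Type) := FDef {
  fd_ann : A;
  fd_ret : ty;
  fd_name : fname;
  fd_params : list (A * (ty * pname));
  fd_body : exp A
}.
Arguments FDef {A}.
Arguments fd_ann {A}.
Arguments fd_ret {A}.
Arguments fd_name {A}.
Arguments fd_params {A}.
Arguments fd_body {A}.

Record program (A : Type) := Program {
  p_structs : list (sdef A);
  p_funs : list (fdef A)
}.
Arguments Program {A}.
Arguments p_structs {A}.
Arguments p_funs {A}.

Definition wf_program {A : Type} (P : program A) : Prop :=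
  NoDup (map sd_name (p_structs P)) /\
  NoDup (map fd_name (p_funs P)) /\
  Forall (fun sd => NoDup (map (fun d => snd (snd d)) (sd_members sd))) (p_structs P) /\
  Forall (fun fd => NoDup (map (fun d => snd (snd d)) (fd_params fd))) (p_funs P).

Fixpoint erase_exp {A : Type} (e : exp A) : exp unit :=
  match e with
  | ENum n => ENum n
  | ENull => ENull
  | EPar x => EPar x
  | EApp f args => EApp f (map (fun a => (tt, erase_exp (snd a))) args)
  | EMem e m => EMem (erase_exp e) m
  | EAssign e0 m e1 => EAssign (erase_exp e0) m (erase_exp e1)
  | ECond e0 e1 e2 => ECond (erase_exp e0) (erase_exp e1) (erase_exp e2)
  | ESeq es => ESeq (map (fun a => (tt, erase_exp (snd a))) es)
  | EUop u e => EUop u (erase_exp e)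
  | EBop b e1 e2 => EBop b (erase_exp e1) (erase_exp e2)
  | EMalloc s => EMalloc s
  | EFree e => EFree (erase_exp e)
  end.

Definition erase_decl {A B : Type} (d : A * B) : unit * B := (tt, snd d).

Definition erase_sdef {A : Type} (sd : sdef A) : sdef unit :=
  SDef tt (sd_name sd) (map erase_decl (sd_members sd)).

Definition erase_fdef {A : Type} (fd : fdef A) : fdef unit :=
  FDef tt (fd_ret fd) (fd_name fd) (map erase_decl (fd_params fd))
       (erase_exp (fd_body fd)).

Definition erase_program {A : Type} (P : program A) : program unit :=
  Program (map erase_sdef (p_structs P)) (map erase_fdef (p_funs P)).

Definition find_struct {A : Type} (P : program A) (s : sname) : option (sdef A) :=
  find (fun sd => String.eqb (sd_name sd) s) (p_structs P).

Definition find_fun {A : Type} (P : program A) (f : fname) : option (fdef A) :=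
  find (fun fd => String.eqb (fd_name fd) f) (p_funs P).

Definition find_member {A : Type} (sd : sdef A) (m : mname) : option (A * ty) :=
  match find (fun d => String.eqb (snd (snd d)) m) (sd_members sd) with
  | Some d => Some (fst d, fst (snd d))
  | None => None
  end.

Definition struct_defined {A : Type} (P : program A) (s : sname) : Prop :=
  In s (map sd_name (p_structs P)).

Fixpoint lookup {B : Type} (G : list (pname * B)) (x : pname) : option B :=
  match G with
  | [] => None
  | (y, b) :: G' => if String.eqb y x then Some b else lookup G' x
  end.

Definition ty_structs (T : ty) : list sname :=
  match T with TStruct s => [s] | _ => [] end.

Fixpoint exp_structs {A : Type} (e : exp A) : list sname :=
  match e with
  | ENum _ | ENull | EPar _ => []
  | EApp _ args => flat_map (fun a => exp_structs (snd a)) args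
  | EMem e _ => exp_structs e
  | EAssign e0 _ e1 => exp_structs e0 ++ exp_structs e1
  | ECond e0 e1 e2 => exp_structs e0 ++ exp_structs e1 ++ exp_structs e2
  | ESeq es => flat_map (fun a => exp_structs (snd a)) es
  | EUop _ e => exp_structs e
  | EBop _ e1 e2 => exp_structs e1 ++ exp_structs e2
  | EMalloc s => [s]
  | EFree e => exp_structs e
  end.

Fixpoint exp_funs {A : Type} (e : exp A) : list fname :=
  match e with
  | ENum _ | ENull | EPar _ | EMalloc _ => []
  | EApp f args => f :: flat_map (fun a => exp_funs (snd a)) args
  | EMem e _ => exp_funs e
  | EAssign e0 _ e1 => exp_funs e0 ++ exp_funs e1
  | ECond e0 e1 e2 => exp_funs e0 ++ exp_funs e1 ++ exp_funs e2
  | ESeq es => flat_map (fun a => exp_funs (snd a)) es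
  | EUop _ e => exp_funs e
  | EBop _ e1 e2 => exp_funs e1 ++ exp_funs e2
  | EFree e => exp_funs e
  end.

Definition prog_structs {A : Type} (P : program A) : list sname :=
  (map sd_name (p_structs P) ++
  flat_map (fun sd => flat_map (fun d => ty_structs (fst (snd d))) (sd_members sd))
           (p_structs P) ++
  flat_map (fun fd : fdef A => (ty_structs (fd_ret fd) ++
                      flat_map (fun d => ty_structs (fst (snd d))) (fd_params fd) ++
                      exp_structs (fd_body fd))%list)
           (p_funs P))%list.

Definition prog_funs {A : Type} (P : program A) : list fname :=
  flat_map (fun fd => fd_name fd :: exp_funs (fd_body fd)) (p_funs P).

Definition sane {A : Type} (P : program A) : Prop :=
  (forall s, In s (prog_structs P) -> struct_defined P s) /\
  (forall f, In f (prog_funs P) -> In f (map fd_name (p_funs P))) /\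
  (exists fd, find_fun P "main"%string = Some fd /\ fd_ret fd = TInt /\ fd_params fd = []).

Definition subty {A : Type} (P : program A) (T1 T2 : ty) : Prop :=
  T1 = T2 \/ (exists s, T1 = TVoid /\ T2 = TStruct s /\ struct_defined P s).

Definition is_max {A : Type} (P : program A) (T1 T2 T3 : ty) : Prop :=
  (subty P T1 T2 /\ T3 = T2) \/ (subty P T2 T1 /\ T3 = T1).

Definition uop_has_type (u : uop) (T : ty) : Prop :=
  match u with UNeg => T = TInt | UNot => True end.

Definition bop_has_type (b : bop) (T : ty) : Prop :=
  match b with BEq | BNe => True | _ => T = TInt end.

Section LCTyping.
Context {A : Type} (P : program A).

Inductive lc_exp (G : list (pname * ty)) : exp A -> ty -> Prop :=
| T_int n : lc_exp G (ENum n) TInt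
| T_null : lc_exp G ENull TVoid
| T_par x T : lookup G x = Some T -> lc_exp G (EPar x) T
| T_app f args fd :
    find_fun P f = Some fd ->
    Forall2 (fun a d => exists T', lc_exp G (snd a) T' /\ subty P T' (fst (snd d)))
            args (fd_params fd) ->
    lc_exp G (EApp f args) (fd_ret fd)
| T_member e0 s m sd a T :
    lc_exp G e0 (TStruct s) ->
    find_struct P s = Some sd -> find_member sd m = Some (a, T) ->
    lc_exp G (EMem e0 m) T
| T_assign e0 s m e1 sd a T T1 :
    lc_exp G e0 (TStruct s) ->
    find_struct P s = Some sd -> find_member sd m = Some (a, T) ->
    lc_exp G e1 T1 -> subty P T1 T ->
    lc_exp G (EAssign e0 m e1) T
| T_cond e0 e1 e2 T0 T1 T2 T3 :
    lc_exp G e0 T0 -> lc_exp G e1 T1 -> lc_exp G e2 T2 -> is_max P T1 T2 T3 ->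
    lc_exp G (ECond e0 e1 e2) T3
| T_seq es Ts :
    es <> [] ->
    Forall2 (fun a T => lc_exp G (snd a) T) es Ts ->
    lc_exp G (ESeq es) (last Ts TInt)
| T_uop u e0 T0 :
    lc_exp G e0 T0 -> uop_has_type u T0 -> lc_exp G (EUop u e0) TInt
| T_bop b e1 e2 T1 T2 T3 :
    lc_exp G e1 T1 -> lc_exp G e2 T2 -> is_max P T1 T2 T3 -> bop_has_type b T3 ->
    lc_exp G (EBop b e1 e2) TInt
| T_malloc s : struct_defined P s -> lc_exp G (EMalloc s) (TStruct s)
| T_mfree e0 s : lc_exp G e0 (TStruct s) -> lc_exp G (EFree e0) TVoid.

Definition lc_fun_ok (fd : fdef A) : Prop :=
  exists T', lc_exp (map (fun d => (snd (snd d), fst (snd d))) (fd_params fd))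
                    (fd_body fd) T' /\ subty P T' (fd_ret fd).

Definition lc_prg_ok : Prop := sane P /\ Forall lc_fun_ok (p_funs P).
End LCTyping.

Section FTyping.
Context {Fe : Type} (P : program (formula Fe)).

Definition at_ty (T : ty) : formula Fe :=
  match T with
  | TStruct s => match find_struct P s with Some sd => sd_ann sd | None => F1 end
  | _ => F1
  end.

Fixpoint never_last_ok (th : formula Fe) (es : list (formula Fe * exp (formula Fe)))
         (Ts : list ty) (T : ty) : Prop :=
  match es, Ts with
  | a :: es', Ti :: Ts' =>
      (Ti <> T -> entails th (FOr (FNot (fst a)) (fors (map fst es')))) /\
      never_last_ok th es' Ts' T
  | _, _ => True
  end.

Inductive ft_exp : formula Fe -> list (pname * (ty * formula Fe)) ->
                   exp (formula Fe) -> ty -> Prop :=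
| FT_int th D n : ft_exp th D (ENum n) TInt
| FT_null th D : ft_exp th D ENull TVoid
| FT_par th D x T psi :
    lookup D x = Some (T, psi) -> entails th psi -> ft_exp th D (EPar x) T
| FT_app th D f args fd :
    find_fun P f = Some fd ->
    entails th (fd_ann fd) ->
    Forall2 (fun a d => exists T', ft_exp th D (snd a) T' /\ subty P T' (fst (snd d))
                                   /\ entails th (fiff (fst a) (fst d)))
            args (fd_params fd) ->
    ft_exp th D (EApp f args) (fd_ret fd)
| FT_member th D e0 s m sd a T :
    ft_exp th D e0 (TStruct s) ->
    find_struct P s = Some sd -> find_member sd m = Some (a, T) ->
    entails th a ->
    ft_exp th D (EMem e0 m) T
| FT_assign th D e0 s m e1 sd a T T1 :
    ft_exp th D e0 (TStruct s) ->
    find_struct P s = Some sd -> find_member sd m = Some (a, T) ->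
    entails th a ->
    ft_exp th D e1 T1 -> subty P T1 T ->
    ft_exp th D (EAssign e0 m e1) T
| FT_cond th D e0 e1 e2 T0 T1 T2 T3 :
    ft_exp th D e0 T0 -> ft_exp th D e1 T1 -> ft_exp th D e2 T2 -> is_max P T1 T2 T3 ->
    ft_exp th D (ECond e0 e1 e2) T3
| FT_seq th D es Ts T :
    es <> [] ->
    entails th (fors (map fst es)) ->
    Forall2 (fun a Ti => ft_exp (FAnd th (fst a)) D (snd a) Ti) es Ts ->
    T = last Ts TInt ->
    never_last_ok th es Ts T ->
    ft_exp th D (ESeq es) T
| FT_uop th D u e0 T0 :
    ft_exp th D e0 T0 -> uop_has_type u T0 -> ft_exp th D (EUop u e0) TInt
| FT_bop th D b e1 e2 T1 T2 T3 :
    ft_exp th D e1 T1 -> ft_exp th D e2 T2 -> is_max P T1 T2 T3 -> bop_has_type b T3 ->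
    ft_exp th D (EBop b e1 e2) TInt
| FT_malloc th D s sd :
    struct_defined P s -> find_struct P s = Some sd -> entails th (sd_ann sd) ->
    ft_exp th D (EMalloc s) (TStruct s)
| FT_mfree th D e0 s : ft_exp th D e0 (TStruct s) -> ft_exp th D (EFree e0) TVoid.

Definition ft_struct_ok (th : formula Fe) (sd : sdef (formula Fe)) : Prop :=
  Forall (fun d => entails th (fimpl (fst d) (at_ty (fst (snd d))))) (sd_members sd).

Definition ft_fun_ok (th : formula Fe) (fd : fdef (formula Fe)) : Prop :=
  entails th (at_ty (fd_ret fd)) /\
  Forall (fun d => entails th (fimpl (fst d) (at_ty (fst (snd d))))) (fd_params fd) /\
  exists T', ft_exp th (map (fun d => (snd (snd d), (fst (snd d), fst d))) (fd_params fd))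
                    (fd_body fd) T' /\ subty P T' (fd_ret fd).

Definition ft_prg_ok (phi : formula Fe) : Prop :=
  sane P /\
  (exists fd, find_fun P "main"%string = Some fd /\ fd_ann fd = F1) /\
  Forall (fun sd => ft_struct_ok (FAnd phi (sd_ann sd)) sd) (p_structs P) /\
  Forall (fun fd => ft_fun_ok (FAnd phi (fd_ann fd)) fd) (p_funs P).
End FTyping.

(* Main.v *)
Require Import Defs.
From Stdlib Require Import List String ZArith Bool.
Import ListNotations.

Section S.
Context {A : Type}.

Lemma find_fun_erase (P : program A) f :
  find_fun (erase_program P) f = option_map erase_fdef (find_fun P f).
Proof.
  unfold find_fun; simpl. destruct P as [ss fs]; simpl.
  induction fs as [|fd fs IH]; simpl; auto.
  destruct (String.eqb (fd_name fd) f); simpl; auto.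
Qed.

Lemma find_struct_erase (P : program A) s :
  find_struct (erase_program P) s = option_map erase_sdef (find_struct P s).
Proof.
  unfold find_struct; simpl. destruct P as [ss fs]; simpl.
  induction ss as [|sd ss IH]; simpl; auto.
  destruct (String.eqb (sd_name sd) s); simpl; auto.
Qed.

Lemma find_member_erase (sd : sdef A) m a T :
  find_member sd m = Some (a, T) -> find_member (erase_sdef sd) m = Some (tt, T).
Proof.
  unfold find_member, erase_sdef; simpl.
  induction (sd_members sd) as [|d l IH]; simpl; try discriminate.
  destruct d as [x [t n]]; unfold erase_decl at 1; simpl.
  destruct (String.eqb n m); simpl.
  - intros H0; inversion H0; auto.
  - exact IH.
Qed.

Lemma struct_defined_erase (P : program A) s :
  struct_defined (erase_program P) s <-> struct_defined P s.
Proof.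
  unfold struct_defined; simpl. rewrite map_map. simpl. tauto.
Qed.

Lemma subty_erase (P : program A) T1 T2 :
  subty P T1 T2 -> subty (erase_program P) T1 T2.
Proof.
  unfold subty. intros [H|[s [H1 [H2 H3]]]]; [left; auto|right].
  exists s; repeat split; auto. apply struct_defined_erase; auto.
Qed.

Lemma is_max_erase (P : program A) T1 T2 T3 :
  is_max P T1 T2 T3 -> is_max (erase_program P) T1 T2 T3.
Proof.
  unfold is_max. intros [[H1 H2]|[H1 H2]]; [left|right]; split; auto;
  apply subty_erase; auto.
Qed.

Lemma erase_structs_funs : forall (e : exp A),
  exp_structs (erase_exp e) = exp_structs e /\ exp_funs (erase_exp e) = exp_funs e.
Proof.
  fix IH 1.
  assert (HL : forall l : list (A * exp A),
      flat_map (fun a => exp_structs (snd a)) (map (fun a => (tt, erase_exp (snd a))) l)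
        = flat_map (fun a => exp_structs (snd a)) l /\
      flat_map (fun a => exp_funs (snd a)) (map (fun a => (tt, erase_exp (snd a))) l)
        = flat_map (fun a => exp_funs (snd a)) l).
  { fix IHl 1. intros [|[a x] l]; simpl; [auto|].
    destruct (IH x) as [Ha Hb]. destruct (IHl l) as [Hc Hd].
    split; congruence. }
  intros e; destruct e as [n| |x|f args|e m|e0 m e1|e0 e1 e2|es|u e|b e1 e2|s|e]; simpl.
  - auto.
  - auto.
  - auto.
  - destruct (HL args). split; congruence.
  - apply IH.
  - destruct (IH e0); destruct (IH e1). split; congruence.
  - destruct (IH e0); destruct (IH e1); destruct (IH e2). split; congruence.
  - destruct (HL es). split; congruence.
  - apply IH.
  - destruct (IH e1); destruct (IH e2). split; congruence.
  - auto.
  - apply IH.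
Qed.

Lemma sane_erase (P : program A) : sane P -> sane (erase_program P).
Proof.
  destruct P as [ss fs]. unfold sane, prog_structs, prog_funs, struct_defined; simpl.
  intros [H1 [H2 [fd [Hf [Hr Hp]]]]].
  assert (E1 : map sd_name (map erase_sdef ss) = map sd_name ss)
    by (rewrite map_map; reflexivity).
  assert (E2 : map fd_name (map erase_fdef fs) = map fd_name fs)
    by (rewrite map_map; reflexivity).
  assert (E3 : flat_map (fun sd => flat_map (fun d => ty_structs (fst (snd d))) (sd_members sd)) (map erase_sdef ss)
    = flat_map (fun sd => flat_map (fun d => ty_structs (fst (snd d))) (sd_members sd)) ss).
  { clear -ss. induction ss as [|sd ss IH]; simpl; auto. rewrite IH. f_equal.
    destruct sd as [a n ms]; simpl. clear. induction ms; simpl; auto. rewrite IHms; auto. }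
  assert (E4 : flat_map (fun fd : fdef unit => (ty_structs (fd_ret fd) ++
                      flat_map (fun d => ty_structs (fst (snd d))) (fd_params fd) ++
                      exp_structs (fd_body fd))%list) (map erase_fdef fs)
     = flat_map (fun fd : fdef A => (ty_structs (fd_ret fd) ++
                      flat_map (fun d => ty_structs (fst (snd d))) (fd_params fd) ++
                      exp_structs (fd_body fd))%list) fs).
  { clear -fs. induction fs as [|f fs IH]; simpl; auto. rewrite IH. f_equal.
    destruct f as [a r n ps b]; simpl. f_equal. f_equal.
    - clear. induction ps; simpl; auto. rewrite IHps; auto.
    - apply erase_structs_funs. }
  assert (E5 : flat_map (fun fd : fdef unit => fd_name fd :: exp_funs (fd_body fd)) (map erase_fdef fs)
     = flat_map (fun fd : fdef A => fd_name fd :: exp_funs (fd_body fd)) fs).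
  { clear -fs. induction fs as [|f fs IH]; simpl; auto. rewrite IH. f_equal. f_equal.
    apply erase_structs_funs. }
  rewrite E1, E3, E4, E2, E5. split; [|split]; auto.
  exists (erase_fdef fd). pose proof (find_fun_erase (Program ss fs) "main"%string) as HE.
  rewrite Hf in HE. split; [exact HE|]. simpl. rewrite Hp. auto.
Qed.

Definition envE (D : list (pname * (ty * A))) : list (pname * ty) :=
  map (fun p => (fst p, fst (snd p))) D.

Lemma lookup_envE D x T psi : lookup D x = Some (T, psi) -> lookup (envE D) x = Some T.
Proof.
  induction D as [|[y [T' p]] D IH]; simpl; try discriminate.
  destruct (String.eqb y x); auto. intros H; inversion H; auto.
Qed.
End S.

Section F.
Context {Fe : Type} (P : program (formula Fe)).

Lemma ft_lc : forall th D e T, ft_exp P th D e T ->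
  lc_exp (erase_program P) (envE D) (erase_exp e) T.
Proof.
  fix IH 5. intros th D e T H. destruct H; simpl.
  - constructor.
  - constructor.
  - econstructor. eapply lookup_envE; eauto.
  - apply (T_app _ _ _ _ (erase_fdef fd)).
    + rewrite find_fun_erase, H; reflexivity.
    + simpl. clear H H0. revert H1. generalize args (fd_params fd).
      fix IH2 3. intros l1 l2 H1. destruct H1 as [|a d l1 l2 Hx Hl]; simpl; constructor.
      * destruct Hx as [T' [Ht [Hs _]]]. exists T'. split.
        -- exact (IH _ _ _ _ Ht).
        -- apply subty_erase; auto.
      * exact (IH2 _ _ Hl).
  - eapply (T_member _ _ _ s _ (erase_sdef sd)).
    + exact (IH _ _ _ _ H).
    + rewrite find_struct_erase, H0; reflexivity.
    + eapply find_member_erase; eauto.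
  - eapply (T_assign _ _ _ s _ _ (erase_sdef sd)).
    + exact (IH _ _ _ _ H).
    + rewrite find_struct_erase, H0; reflexivity.
    + eapply find_member_erase; eauto.
    + exact (IH _ _ _ _ H3).
    + apply subty_erase; auto.
  - eapply T_cond.
    + exact (IH _ _ _ _ H).
    + exact (IH _ _ _ _ H0).
    + exact (IH _ _ _ _ H1).
    + apply is_max_erase; auto.
  - subst T. apply T_seq.
    + destruct es; simpl; congruence.
    + clear H H0 H3. revert H1. generalize es Ts.
      fix IH2 3. intros l1 l2 H1. destruct H1 as [|a d l1 l2 Hx Hl]; simpl; constructor.
      * exact (IH _ _ _ _ Hx).
      * exact (IH2 _ _ Hl).
  - eapply T_uop; [exact (IH _ _ _ _ H)|auto].
  - eapply T_bop; [exact (IH _ _ _ _ H)|exact (IH _ _ _ _ H0)| |eauto].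
    apply is_max_erase; auto.
  - apply T_malloc. apply struct_defined_erase; auto.
  - eapply T_mfree. exact (IH _ _ _ _ H).
Qed.
End F.

Theorem theorem1 :
  forall (Fe : Type) (phi : formula Fe) (P : program (formula Fe)),
    (exists l : list Fe, forall f : Fe, In f l) ->
    wf_program P ->
    ft_prg_ok P phi ->
    lc_prg_ok (erase_program P).
Proof.
  intros Fe phi P _ _ [Hs [_ [_ Hf]]]. split.
  - apply sane_erase; auto.
  - unfold erase_program; simpl. apply Forall_map.
    eapply Forall_impl; [|exact Hf]. simpl.
    intros fd [_ [_ [T' [Ht Hsub]]]]. unfold lc_fun_ok. exists T'. simpl. split.
    + pose proof (ft_lc P _ _ _ _ Ht) as H. unfold envE in H.
      rewrite map_map in H. unfold erase_decl. rewrite map_map. exact H.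
    + apply subty_erase; auto.
Qed.
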